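(* Let $k\ge1$, $A,B,C_1,\dots,C_k\in\mathbb{C}^{r\times r}$ with $C_j+mI$ invertible for all $m\ge0$ and all $j$, $AB=BA$, $C_jC_l=C_lC_j$ for all $j,l$. Fix $i$ and $n\ge1$ and suppose $C_i-mI$ is invertible for $0\le m\le n$. Then $$F_{\mathcal C}[C_i-nI]=F_{\mathcal C}+x_iAB\Big[\sum_{n_1=1}^nF_{\mathcal C}[A+I,\,B+I,\,C_i+(2-n_1)I]\,(C_i-n_1I)^{-1}(C_i-(n_1-1)I)^{-1}\Big].$$
   Context: For $M\in\mathbb{C}^{r\times r}$: $(M)_0=I$, $(M)_m=M(M+I)\cdots(M+(m-1)I)$, $(M)^{-1}_m=((M)_m)^{-1}$. $$F_{\mathcal C}=F_{\mathcal C}[A,B;C_1,\dots,C_k;x_1,\dots,x_k]=\sum_{m_1,\dots,m_k\ge0}(A)_{m_1+\cdots+m_k}(B)_{m_1+\cdots+m_k}\prod_{j=1}^k(C_j)^{-1}_{m_j}\prod_{j=1}^k\frac{x_j^{m_j}}{m_j!},$$ $x_j$ scalar variables, matrix products in order of increasing index; identities are of formal power series in the $x_j$. $F_{\mathcal C}[\dots]$ lists only the shifted parameters, all others unchanged. *)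

(* Defs.v *)
From HB Require Import structures.
From mathcomp Require Import all_boot all_order all_algebra.
From mathcomp Require Import complex.
From mathcomp Require Import reals.
Set Implicit Arguments. Unset Strict Implicit. Unset Printing Implicit Defensive.
Import Order.TTheory GRing.Theory Num.Theory.
Local Open Scope ring_scope.

Section Defs.
Variables (K : fieldType) (r : nat).

Fixpoint poch (M : 'M[K]_r) (m : nat) : 'M[K]_r :=
  if m is m'.+1 then poch M m' *m (M + (m'%:R)%:M) else 1%:M.

Definition pochinv (M : 'M[K]_r) (m : nat) : 'M[K]_r := invmx (poch M m).

Definition ordprod (k : nat) (F : 'I_k -> 'M[K]_r) : 'M[K]_r :=
  foldr (fun j acc => F j *m acc) 1%:M (enum 'I_k).

(* Coefficient of x_1^{m_1} ... x_k^{m_k} in F_C[A,B;C_1..C_k;x_1..x_k];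
   a formal power series is identified with its coefficient function
   on multi-indices m : 'I_k -> nat. *)
Definition FCcoef (k : nat) (A B : 'M[K]_r) (C : 'I_k -> 'M[K]_r)
    (m : 'I_k -> nat) : 'M[K]_r :=
  let s := (\sum_(j < k) m j)%N in
  (\prod_(j < k) ((m j)`!)%:R)^-1 *:
    (poch A s *m poch B s *m ordprod (fun j => pochinv (C j) (m j))).

Definition updC (k : nat) (C : 'I_k -> 'M[K]_r) (i : 'I_k) (X : 'M[K]_r) :
    'I_k -> 'M[K]_r := fun j => if j == i then X else C j.

(* multi-index m - e_i (used only when m i > 0) *)
Definition decr (k : nat) (m : 'I_k -> nat) (i : 'I_k) : 'I_k -> nat :=
  fun j => if j == i then (m j).-1 else m j.

(* coefficient of x^m in x_i * G, for a series G with coefficients G *)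
Definition mulxcoef (k : nat) (i : 'I_k) (G : ('I_k -> nat) -> 'M[K]_r)
    (m : 'I_k -> nat) : 'M[K]_r :=
  if (0 < m i)%N then G (decr m i) else 0.

End Defs.

(* Main.v *)
Require Import Defs.
From HB Require Import structures.
From mathcomp Require Import all_boot all_order all_algebra.
From mathcomp Require Import complex.
From mathcomp Require Import reals.
From mathcomp Require Import ring.
From Stdlib Require Import FunctionalExtensionality.
Import Order.TTheory GRing.Theory Num.Theory.
Set Implicit Arguments. Unset Strict Implicit. Unset Printing Implicit Defensive.
Local Open Scope ring_scope.

Section Core.
Variables (K : fieldType) (n : nat).
Local Notation M := 'M[K]_n.+1.

Lemma sA (a : K) : (a%:M : M) = a%:A.
Proof. by rewrite -scalemx1. Qed.

Lemma scal_comm (a : K) (x : M) : GRing.comm a%:M x.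
Proof. by rewrite /GRing.comm -!mulmxE scalar_mxC. Qed.

Definition bic (c x : M) := forall y, GRing.comm c y -> GRing.comm x y.

Lemma bic_c c : bic c c. Proof. by []. Qed.
Lemma bic_s c a : bic c a%:M. Proof. by move=> y _; apply: scal_comm. Qed.
Lemma bic_D c x y : bic c x -> bic c y -> bic c (x + y).
Proof. move=> hx hy z hz; apply/commr_sym/commrD; apply/commr_sym; auto. Qed.
Lemma bic_N c x : bic c x -> bic c (- x).
Proof. move=> hx z hz; apply/commr_sym/commrN; apply/commr_sym; auto. Qed.
Lemma bic_B c x y : bic c x -> bic c y -> bic c (x - y).
Proof. by move=> hx hy; apply: bic_D => //; apply: bic_N. Qed.
Lemma bic_M c x y : bic c x -> bic c y -> bic c (x * y).
Proof. move=> hx hy z hz; apply/commr_sym/commrM; apply/commr_sym; auto. Qed.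
Lemma bic_V c x : bic c x -> bic c x^-1.
Proof. move=> hx z hz; apply/commr_sym/commrV; apply/commr_sym; auto. Qed.
Lemma bic_comm c x y : bic c x -> bic c y -> GRing.comm x y.
Proof. move=> hx hy; apply: hx; apply/commr_sym; apply: hy; exact: commr_refl. Qed.

Lemma pochS (x : M) m : poch x m.+1 = poch x m * (x + (m%:R)%:M).
Proof. by rewrite /= mulmxE. Qed.

Lemma bic_poch c x m : bic c x -> bic c (poch x m).
Proof.
move=> hx; elim: m => [|m IH]; first exact: bic_s.
by rewrite pochS; apply: bic_M => //; apply: bic_D => //; apply: bic_s.
Qed.

Lemma comm_poch (x y : M) m : GRing.comm x y -> GRing.comm x (poch y m).
Proof.
move=> h; elim: m => [|m IH]; first by apply/commr_sym/scal_comm.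
rewrite pochS; apply: commrM => //; apply: commrD => //; apply/commr_sym/scal_comm.
Qed.

Lemma poch_shift (x : M) m : poch x m.+1 = x * poch (x + 1) m.
Proof.
elim: m => [|m IH].
  by rewrite pochS /= !sA scale0r addr0 scale1r mul1r mulr1.
rewrite pochS IH -mulrA [in RHS]pochS; congr (_ * (_ * _)).
by rewrite !sA -addrA; congr (_ + _); rewrite -natr1 scalerDl scale1r addrC.
Qed.

Lemma poch_unit (x : M) m :
  (forall t : nat, (t < m)%N -> x + (t%:R)%:M \is a GRing.unit) -> poch x m \is a GRing.unit.
Proof.
elim: m => [|m IH] h; first by rewrite /= unitr1.
rewrite pochS unitrMl; first by apply: IH => t ht; apply: h; apply: ltnW.
exact: h.
Qed.

End Core.

Section S.
Variables (K : fieldType) (n : nat).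
Local Notation M := 'M[K]_n.+1.
Lemma step (d : M) b : d - 1 \is a GRing.unit ->
  (forall t : nat, d + (t%:R)%:M \is a GRing.unit) ->
  (poch (d - 1) b.+1)^-1 - (poch d b.+1)^-1 =
  (b.+1)%:R *: ((poch (d + 1) b)^-1 * (d - 1)^-1 * d^-1).
Proof.
move=> ue ud.
have bd : bic d d by [].
have b1 : bic d 1 by rewrite -[1]/(1%:M); apply: bic_s.
have be : bic d (d - 1) by apply: bic_B.
have ud0 : d \is a GRing.unit by move: (ud 0%N); rewrite sA scale0r addr0.
set e := d - 1. set q := poch d b. set q' := poch (d + 1) b.
set f := d + (b%:R)%:M.
have bq : bic d q by apply: bic_poch.
have bf : bic d f by apply: bic_D => //; apply: bic_s.
have uq : q \is a GRing.unit by apply: poch_unit => t _.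
have uf : f \is a GRing.unit by apply: ud.
have h1 : poch e b.+1 = e * q by rewrite poch_shift /e subrK.
have h2 : poch d b.+1 = q * f by rewrite pochS.
have h3 : poch d b.+1 = d * q' by rewrite poch_shift.
have uq' : q' \is a GRing.unit.
  by rewrite -(unitrMr q' ud0) -h3 h2 unitrMl.
have eq' : q' = d^-1 * (q * f) by rewrite -h2 h3 mulKr.
rewrite h1 h2 eq' (invrM uq uf) (invrM ue uq) invrM ?unitrMl ?unitrV // invrK (invrM uq uf).
have fe : f - e = (b.+1%:R)%:A.
  by rewrite /f /e sA -natr1 scalerDl scale1r opprB addrC addrA subrK addrC.

have -> : f^-1 * q^-1 * d * e^-1 * d^-1 = f^-1 * q^-1 * e^-1.
  rewrite -[_ * d * e^-1]mulrA (bic_comm bd (bic_V be)) -!mulrA mulrV //.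
  by rewrite mulr1.
have -> : q^-1 / e - f^-1 / q = f^-1 * q^-1 * (f - e) * e^-1.
  rewrite mulrBr mulrBl -[f^-1 * q^-1 * f]mulrA (bic_comm (bic_V bq) bf) mulKr //.
  by rewrite -[f^-1 / q * e / e]mulrA mulrV // mulr1.
by rewrite fe mulr_algr -scalerAl.
Qed.
End S.

Section S.
Variables (K : fieldType) (n : nat).
Local Notation M := 'M[K]_n.+1.

Lemma shE (c : M) (u v : K) : u = v -> c + u%:M = c + v%:M.
Proof. by move->. Qed.
Lemma subE (c : M) (u : K) : c - u%:M = c + (- u)%:M.
Proof. by rewrite !sA scaleNr. Qed.
Lemma shsh (c : M) (u v : K) : c + u%:M + v%:M = c + (u + v)%:M.
Proof. by rewrite !sA scalerDl addrA. Qed.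

Lemma tele (c : M) b N : (forall t : nat, c + (t%:R)%:M \is a GRing.unit) ->
  (forall m, (m <= N)%N -> c - (m%:R)%:M \is a GRing.unit) ->
  (poch (c - (N%:R)%:M) b.+1)^-1 - (poch c b.+1)^-1 =
  b.+1%:R *: \sum_(1 <= n1 < N.+1)
     ((poch (c + (2%:R - n1%:R)%:M) b)^-1 * (c - (n1%:R)%:M)^-1
        * (c - ((n1.-1)%:R)%:M)^-1).
Proof.
move=> hpos; elim: N => [|N IH] hneg.
  by rewrite big_geq // scaler0 sA scale0r subr0 subrr.
rewrite big_nat_recr // scalerDr -IH; last by move=> m hm; apply: hneg; apply: leqW.
set d := c - (N%:R)%:M.
have e1 : c + (2%:R - N.+1%:R)%:M = d + 1.
  rewrite /d !sA -[X in _ = _ + X](@scale1r K) -scaleNr -[in RHS]addrA -scalerDl; congr (_ + _ *: _).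
  rewrite -natr1; ring.
have e2 : c - (N.+1%:R)%:M = d - 1.
  rewrite /d !sA -[X in _ = _ - X](@scale1r K) -scaleNr -[in RHS]addrA -scaleNr -scalerBl; congr (_ + _ *: _).
  rewrite -natr1; ring.
rewrite e1 e2 -/d -step.
- by rewrite [RHS]addrC addrA subrK.
- by rewrite -e2; apply: hneg.
move=> t; case: (leqP t N) => ht.
  have -> : d + (t%:R)%:M = c - ((N - t)%N%:R)%:M.
    by rewrite /d !subE shsh; apply: shE; rewrite natrB //; ring.
  by apply: hneg; apply: leq_trans (leq_subr t N) (leqnSn N).
have -> : d + (t%:R)%:M = c + ((t - N)%N%:R)%:M.
  by rewrite /d !subE shsh; apply: shE; rewrite natrB ?(ltnW ht) //; ring.
exact: hpos.
Qed.
End S.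

Section S.
Variables (K : fieldType) (n k : nat).
Local Notation M := 'M[K]_n.+1.

Lemma ordprod_ext (F G : 'I_k -> M) : F =1 G -> ordprod F = ordprod G.
Proof.
move=> h; rewrite /ordprod; elim: (enum 'I_k) => [|a l IH] //=.
by rewrite IH h.
Qed.

Lemma ordprod_comm (F : 'I_k -> M) x :
  (forall j, GRing.comm (F j) x) -> GRing.comm (ordprod F) x.
Proof.
move=> h; rewrite /ordprod; elim: (enum 'I_k) => [|a l IH] /=.
  exact: scal_comm.
by rewrite mulmxE; apply/commr_sym/commrM; apply/commr_sym.
Qed.

Lemma ordprod_split (F : 'I_k -> M) i X : F i = X ->
  (forall j, j != i -> GRing.comm (F j) X) ->
  ordprod F = X * ordprod (fun j => if j == i then 1%:M else F j).
Proof.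
move=> hi hc.
suff gen : forall l : seq 'I_k, uniq l ->
  foldr (fun j acc => F j *m acc) 1%:M l =
  (if i \in l then X else 1) * foldr (fun j acc =>
      (if j == i then 1%:M else F j) *m acc) 1%:M l.
  by rewrite /ordprod gen ?enum_uniq // mem_enum.
elim=> [|a l IH] /=; first by rewrite mul1r.
case/andP=> al ul; rewrite !mulmxE IH // in_cons.
case: (eqVneq a i) => [eai | ai] /=.
  by rewrite -eai in hi *; rewrite (negbTE al) hi !mul1r.
by case: (i \in l); rewrite !mulrA ?(hc a ai) ?mul1r ?mulr1.
Qed.
End S.

Section S.
Variables (K : numFieldType) (n k : nat).
Local Notation M := 'M[K]_n.+1.

Lemma comm_ip (x y : M) a b : GRing.comm x y ->
  GRing.comm (poch x a)^-1 (poch y b)^-1.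
Proof.
move=> h; apply/commrV/commr_sym/commrV/commr_sym/comm_poch/commr_sym/comm_poch.
exact/commr_sym.
Qed.

Definition Nf (m : 'I_k -> nat) : K := \prod_(j < k) ((m j)`!)%:R.
Definition sm (m : 'I_k -> nat) := (\sum_(j < k) m j)%N.
Definition Q0 (C : 'I_k -> M) i m :=
  ordprod (fun j => if j == i then 1%:M else pochinv (C j) (m j)).

Lemma FCsplit (A B : M) (C : 'I_k -> M) i (Y : M) (m : 'I_k -> nat) :
  (forall j, GRing.comm (C j) (C i)) -> bic (C i) Y ->
  FCcoef A B (updC C i Y) m =
  (Nf m)^-1 *: (poch A (sm m) * poch B (sm m) * ((poch Y (m i))^-1 * Q0 C i m)).
Proof.
move=> hC hY; rewrite /FCcoef !mulmxE (ordprod_split (i:=i) (X := (poch Y (m i))^-1)).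
- congr (_ *: (_ * (_ * _))); apply: ordprod_ext => j; rewrite /updC.
  by case: (j == i).
- by rewrite /updC eqxx.
move=> j ji; rewrite /updC (negbTE ji); apply: comm_ip.
by apply/commr_sym; apply: hY; apply/commr_sym.
Qed.


Lemma comm_ipi (x y : M) a : GRing.comm x y -> GRing.comm (poch x a)^-1 y^-1.
Proof.
move=> h; apply/commrV/commr_sym/commrV/comm_poch; exact/commr_sym.
Qed.

Lemma main_sq (A B : M) (C : 'I_k -> M) (i : 'I_k) (N : nat) (mi : 'I_k -> nat) :
  (forall (j : 'I_k) (m : nat), C j + (m%:R)%:M \in unitmx) ->
  A *m B = B *m A ->
  (forall j l : 'I_k, C j *m C l = C l *m C j) ->
  (forall m : nat, (m <= N)%N -> C i - (m%:R)%:M \in unitmx) ->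
    FCcoef A B (updC C i (C i - (N%:R)%:M)) mi
    = FCcoef A B C mi
      + mulxcoef i (fun m' =>
          A *m B *m
          (\sum_(1 <= n1 < N.+1)
             FCcoef (A + 1%:M) (B + 1%:M)
                    (updC C i (C i + (2%:R - n1%:R)%:M)) m'
             *m invmx (C i - (n1%:R)%:M)
             *m invmx (C i - ((n1.-1)%:R)%:M))) mi.
Proof.
move=> hpos hAB hCC hneg.
have hC : forall j, GRing.comm (C j) (C i) by move=> j; rewrite /GRing.comm -!mulmxE hCC.
have bCi : bic (C i) (C i) by [].
have bsh : forall u, bic (C i) (C i + u%:M) by move=> u; apply: bic_D => //; apply: bic_s.
have bsub : forall u, bic (C i) (C i - u%:M) by move=> u; apply: bic_B => //; apply: bic_s.
have -> : FCcoef A B C mi = FCcoef A B (updC C i (C i)) mi.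
  congr FCcoef; apply: functional_extensionality => j; rewrite /updC.
  by case: eqP => // ->.
rewrite (FCsplit _ _ _ hC (bsub _)) (FCsplit _ _ _ hC bCi).
rewrite /mulxcoef; case ea: (mi i) => [|b] /=.
  by rewrite invr1 mul1r addr0.
set m' := decr mi i.
have hm'i : m' i = b by rewrite /m' /decr eqxx ea.
have hm'j : forall j, j != i -> m' j = mi j by move=> j ji; rewrite /m' /decr (negbTE ji).
have hQ : Q0 C i m' = Q0 C i mi.
  apply: ordprod_ext => j; case: (eqVneq j i) => // ji; by rewrite hm'j.
have hs : sm mi = (sm m').+1.
  rewrite /sm (bigD1 i) // [in RHS](bigD1 i) //= ea hm'i addSn; congr ((_ + _)%N.+1).
  by apply: eq_bigr => j ji; rewrite hm'j.
have hN : Nf mi = b.+1%:R * Nf m'.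
  rewrite /Nf (bigD1 i) // [in RHS](bigD1 i) //= ea hm'i factS natrM mulrA; congr (_ * _).
  by apply: eq_bigr => j ji; rewrite hm'j.
have hN0 : Nf m' != 0.
  by apply/prodf_neq0 => j _; rewrite pnatr_eq0 -lt0n fact_gt0.
have hb0 : b.+1%:R != 0 :> K by rewrite pnatr_eq0.
under eq_bigr => n1 _ do rewrite (FCsplit _ _ _ hC (bsh _)).
rewrite hm'i hQ hs hN !mulmxE.
have iE : forall x : M, invmx x = x^-1 by [].
rewrite -!pochS.
under eq_bigr => n1 _ do rewrite !iE.
set Q := Q0 C i mi.
have hQc : forall u, GRing.comm Q (C i - u%:M)^-1.
  move=> u; apply: ordprod_comm => j; case: (j == i).
    exact: scal_comm.
  apply: comm_ipi; apply/commr_sym; apply: (bsub u); exact/commr_sym.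
set P' := poch (A + 1%:M) (sm m') * poch (B + 1%:M) (sm m').
set S := \sum_(1 <= n1 < N.+1) ((poch (C i + (2%:R - n1%:R)%:M) b)^-1
            * (C i - (n1%:R)%:M)^-1 * (C i - ((n1.-1)%:R)%:M)^-1).
have -> : \sum_(1 <= n1 < N.+1)
    ((Nf m')^-1 *: (P' * ((poch (C i + (2%:R - n1%:R)%:M) b)^-1 * Q))
      * (C i - (n1%:R)%:M)^-1 * (C i - ((n1.-1)%:R)%:M)^-1)
  = (Nf m')^-1 *: (P' * S * Q).
  rewrite /S mulr_sumr mulr_suml scaler_sumr; apply: eq_bigr => n1 _.
  rewrite -!scalerAl; congr (_ *: _); rewrite -!mulrA; congr (_ * (_ * _)).
  by congr (_ * _); rewrite mulrA (hQc _) -mulrA (hQc _).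
have hP : A * B * P' = poch A (sm m').+1 * poch B (sm m').+1.
  rewrite /P' !poch_shift -!mulrA; congr (A * _); rewrite !mulrA; congr (_ * _).
  have h1 : GRing.comm B (A + 1%:M).
    apply: commrD; first by rewrite /GRing.comm -!mulmxE hAB.
    exact/commr_sym/scal_comm.
  exact: comm_poch h1.
rewrite [RHS]addrC; apply/eqP; rewrite -subr_eq; apply/eqP.
rewrite -scalerBr -mulrBr -mulrBl.
rewrite (tele (c := C i) b (N := N)) //.
rewrite -scalerAl -scalerAr scalerA -[RHS]scalerAr -hP /P' /S !mulrA; congr (_ *: _).
by rewrite invfM mulrAC mulVf // mul1r.
Qed.

End S.


Unset Implicit Arguments. Set Strict Implicit.

Theorem mainTheorem10 (R : realType) (r k : nat)
    (A B : 'M[complex R]_r) (C : 'I_k -> 'M[complex R]_r) (i : 'I_k) (n : nat) :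
  (1 <= k)%N ->
  (forall (j : 'I_k) (m : nat), C j + (m%:R)%:M \in unitmx) ->
  A *m B = B *m A ->
  (forall j l : 'I_k, C j *m C l = C l *m C j) ->
  (1 <= n)%N ->
  (forall m : nat, (m <= n)%N -> C i - (m%:R)%:M \in unitmx) ->
  forall mi : 'I_k -> nat,
    FCcoef A B (updC C i (C i - (n%:R)%:M)) mi
    = FCcoef A B C mi
      + mulxcoef i (fun m' =>
          A *m B *m
          (\sum_(1 <= n1 < n.+1)
             FCcoef (A + 1%:M) (B + 1%:M)
                    (updC C i (C i + (2%:R - n1%:R)%:M)) m'
             *m invmx (C i - (n1%:R)%:M)
             *m invmx (C i - ((n1.-1)%:R)%:M))) mi.
Proof.
case: r A B C => [|r] A B C _ hpos hAB hCC _ hneg mi.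
  by apply/matrixP => p q; case: q.
exact: main_sq.
Qed.
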